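(* Let $(G,\cdot)$ be a semigroup, $(G,\curlywedge)$ a semilattice on the same set $G$, and $\xi,\delta\subseteq G\times G$ binary relations. Then the algebraic system $(G,\cdot,\curlywedge,\xi,\delta)$ is isomorphic to some transformative $\cap$-semigroup of transformations $(\Phi,\cdot,\cap,\xi_\Phi,\delta_\Phi)$ if and only if all of the following hold: (1) $\xi$ is left regular (i.e. $(u,v)\in\xi\Rightarrow(xu,xv)\in\xi$ for all $x,u,v\in G$) and contains the semilattice order $\zeta$; (2) $\delta$ is a left ideal of $(G,\cdot)$ (i.e. $(x,y)\in\delta\Rightarrow(ux,y)\in\delta$ for all $x,y,u\in G$); (3) for all $x,y,z,u,v\in G$: $x(y\curlywedge z)=xy\curlywedge xz$; \ $x\leqslant y\wedge u\leqslant v\wedge y\downarrow v\Rightarrow u\downarrow x$; \ $x\downarrow y\Rightarrow (x\curlywedge y)u=xu\curlywedge yu$; (4) for all $x,y\in G$: $x\curlywedge y\in f_\xi(\{x\})\Rightarrow x\leqslant y$; \ $x\curlywedge y\in f_\xi(\{x,y\})\Rightarrow x\downarrow y$; \ $xy\in f_\xi(\{x\})\Rightarrow x\vdash y$.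
   Context: Notation on $G$: $x\leqslant y$ iff $x\curlywedge y=x$ (this is the semilattice order, denoted $\zeta$); $x\downarrow y$ iff $(x,y)\in\xi$; $x\vdash y$ iff $(x,y)\in\delta$. $G^*=G\cup\{e\}$ is the semigroup obtained from $(G,\cdot)$ by adjoining a new identity element $e\notin G$, and one sets by convention $e\leqslant e$, $e\vdash e$, and $x\vdash e$ for all $x\in G$. The formula $a\boxdot b\leqslant c$ abbreviates $a\vdash b\wedge ab\leqslant c$. A subset $H\subseteq G$ is called $f_\xi$-closed if for all $x,y,t\in G^*$ and $z,u,v\in G$: if $u\downarrow v$, $(u\curlywedge v)x\boxdot y\leqslant zt$, $u\in H$ and $vx\in H$, then $z\in H$. For $X\subseteq G$, $f_\xi(X)$ denotes the least $f_\xi$-closed subset of $G$ containing $X$ (the intersection of all $f_\xi$-closed subsets containing $X$). Transformations: for a nonempty set $A$, a transformation of $A$ is a partial map $A\to A$, regarded as a subset of $A\times A$; $\mathrm{pr}_1 f$ is its domain and $\mathrm{pr}_2 f$ its image. For transformations $f,g$, the product $f\cdot g$ is the composite ''first $f$, then $g$'': $(f\cdot g)(a)=g(f(a))$, defined exactly when $a\in\mathrm{pr}_1 f$ and $f(a)\in\mathrm{pr}_1 g$. A transformative $\cap$-semigroup of transformations is a system $(\Phi,\cdot,\cap,\xi_\Phi,\delta_\Phi)$ where $\Phi$ is a set of transformations of some nonempty set $A$ closed under this product and under set-theoretic intersection of subsets of $A\times A$, $\xi_\Phi=\{(f,g)\in\Phi^2: f$ and $g$ coincide on $\mathrm{pr}_1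 f\cap\mathrm{pr}_1 g\}$ (the semicompatibility relation; i.e. $f$ restricted to $\mathrm{pr}_1 g$ equals $g$ restricted to $\mathrm{pr}_1 f$), and $\delta_\Phi=\{(f,g)\in\Phi^2:\mathrm{pr}_2 f\subseteq\mathrm{pr}_1 g\}$ (the semiadjacency relation). An isomorphism preserves $\cdot$, $\curlywedge\mapsto\cap$, and the two relations in both directions. *)

(* Defs.v *)
(** * Transformations of a set A: partial maps A -> A seen as subsets of A x A *)
Definition transf (A : Type) := A -> A -> Prop.

Definition functional {A : Type} (f : transf A) : Prop :=
  forall a b c, f a b -> f a c -> b = c.

Definition pr1 {A : Type} (f : transf A) (a : A) : Prop := exists b, f a b.
Definition pr2 {A : Type} (f : transf A) (b : A) : Prop := exists a, f a b.

Definition tcomp {A : Type} (f g : transf A) : transf A :=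
  fun a c => exists b, f a b /\ g b c.

Definition tinter {A : Type} (f g : transf A) : transf A :=
  fun a b => f a b /\ g a b.

Definition semicompat {A : Type} (f g : transf A) : Prop :=
  forall a b, (f a b /\ pr1 g a) <-> (g a b /\ pr1 f a).

Definition semiadj {A : Type} (f g : transf A) : Prop :=
  forall b, pr2 f b -> pr1 g b.

Definition transformative_cap_semigroup {A : Type} (Phi : transf A -> Prop) : Prop :=
  (forall f, Phi f -> functional f) /\
  (forall f g, Phi f -> Phi g -> Phi (tcomp f g)) /\
  (forall f g, Phi f -> Phi g -> Phi (tinter f g)).

Definition iso_onto {G A : Type} (mul meet : G -> G -> G) (xi delta : G -> G -> Prop)
  (Phi : transf A -> Prop) (h : G -> transf A) : Prop :=
  (forall x, Phi (h x)) /\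
  (forall f, Phi f -> exists x, h x = f) /\
  (forall x y, h x = h y -> x = y) /\
  (forall x y, h (mul x y) = tcomp (h x) (h y)) /\
  (forall x y, h (meet x y) = tinter (h x) (h y)) /\
  (forall x y, xi x y <-> semicompat (h x) (h y)) /\
  (forall x y, delta x y <-> semiadj (h x) (h y)).

Definition representable {G : Type} (mul meet : G -> G -> G) (xi delta : G -> G -> Prop) : Prop :=
  exists (A : Type) (Phi : transf A -> Prop) (h : G -> transf A),
    inhabited A /\ transformative_cap_semigroup Phi /\ iso_onto mul meet xi delta Phi h.

Definition sleq {G : Type} (meet : G -> G -> G) (x y : G) : Prop := meet x y = x.

(** G^* = G + {e}, with e represented by None; right multiplication by an
    element of G^* (e acts as identity). *)
Definition omul {G : Type} (mul : G -> G -> G) (a : G) (x : option G) : G :=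
  match x with None => a | Some x' => mul a x' end.

(** a |- b for a in G, b in G^*, with the convention a |- e *)
Definition odelta {G : Type} (delta : G -> G -> Prop) (a : G) (b : option G) : Prop :=
  match b with None => True | Some b' => delta a b' end.

Definition boxleq {G : Type} (mul meet : G -> G -> G) (delta : G -> G -> Prop)
  (a : G) (b : option G) (c : G) : Prop :=
  odelta delta a b /\ sleq meet (omul mul a b) c.

Definition fxi_closed {G : Type} (mul meet : G -> G -> G) (xi delta : G -> G -> Prop)
  (H : G -> Prop) : Prop :=
  forall (x y t : option G) (z u v : G),
    xi u v ->
    boxleq mul meet delta (omul mul (meet u v) x) y (omul mul z t) ->
    H u -> H (omul mul v x) -> H z.

Definition fxi {G : Type} (mul meet : G -> G -> G) (xi delta : G -> G -> Prop)
  (X : G -> Prop) : G -> Prop :=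
  fun g => forall H : G -> Prop, fxi_closed mul meet xi delta H ->
             (forall w, X w -> H w) -> H g.

(* Main.v *)
Require Import Defs.
From Stdlib Require Import FunctionalExtensionality PropExtensionality.

Lemma rel_ext {A : Type} (f g : transf A) : (forall a b, f a b <-> g a b) -> f = g.
Proof.
  intros h. apply functional_extensionality; intro a.
  apply functional_extensionality; intro b. apply propositional_extensionality. apply h.
Qed.

Section Suff.
Variables (G : Type) (mul meet : G -> G -> G) (xi delta : G -> G -> Prop).
Hypothesis mul_assoc : forall x y z, mul x (mul y z) = mul (mul x y) z.
Hypothesis meet_assoc : forall x y z, meet x (meet y z) = meet (meet x y) z.
Hypothesis meet_comm : forall x y, meet x y = meet y x.
Hypothesis meet_idem : forall x, meet x x = x.
Hypothesis C1 : forall x u v, xi u v -> xi (mul x u) (mul x v).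
Hypothesis C2 : forall x y, sleq meet x y -> xi x y.
Hypothesis C3 : forall x y u, delta x y -> delta (mul u x) y.
Hypothesis C4 : forall x y z, mul x (meet y z) = meet (mul x y) (mul x z).
Hypothesis C5 : forall x y u v, sleq meet x y -> sleq meet u v -> xi y v -> xi u x.
Hypothesis C6 : forall x y u, xi x y -> mul (meet x y) u = meet (mul x u) (mul y u).

Lemma xi_refl u : xi u u.
Proof. apply C2; unfold sleq; apply meet_idem. Qed.
Lemma le_refl a : sleq meet a a.
Proof. unfold sleq; apply meet_idem. Qed.
Lemma meet_le_l a b : sleq meet (meet a b) a.
Proof. unfold sleq. rewrite (meet_comm (meet a b) a), meet_assoc, meet_idem. reflexivity. Qed.
Lemma meet_le_r a b : sleq meet (meet a b) b.
Proof. unfold sleq. rewrite <- meet_assoc, meet_idem. reflexivity. Qed.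
Lemma le_trans a b c : sleq meet a b -> sleq meet b c -> sleq meet a c.
Proof. unfold sleq; intros h1 h2. rewrite <- h1, <- meet_assoc, h2. reflexivity. Qed.
Lemma le_meet a b c : sleq meet c a -> sleq meet c b -> sleq meet c (meet a b).
Proof. unfold sleq; intros h1 h2. rewrite meet_assoc, h1, h2. reflexivity. Qed.
Lemma le_mulr a b x : sleq meet a b -> sleq meet (mul a x) (mul b x).
Proof.
  intros h. unfold sleq. pose proof (C6 a b x (C2 a b h)) as E.
  unfold sleq in h. rewrite h in E. symmetry; exact E.
Qed.
Lemma xi_sym x y : xi x y -> xi y x.
Proof. intro h. exact (C5 x x y y (le_refl x) (le_refl y) h). Qed.

Section Closed.
Variable H : G -> Prop.
Hypothesis Hc : fxi_closed mul meet xi delta H.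

Lemma up w z : H w -> sleq meet w z -> H z.
Proof.
  intros hw hle. apply (Hc None None None z w w (xi_refl w)); auto.
  unfold boxleq, odelta, omul. split; [exact I|]. rewrite meet_idem. exact hle.
Qed.

Lemma pref z t : H (mul z t) -> H z.
Proof.
  intros hw. apply (Hc None None (Some t) z (mul z t) (mul z t) (xi_refl _)); auto.
  unfold boxleq, odelta, omul. split; [exact I|]. rewrite meet_idem. apply le_refl.
Qed.

Lemma trans3 a b c : H (meet a b) -> H (meet b c) -> H (meet a c).
Proof.
  intros h1 h2.
  apply (Hc None None None (meet a c) (meet a b) (meet b c)); auto.
  - exact (C5 (meet b c) b (meet a b) b (meet_le_l b c) (meet_le_r a b) (xi_refl b)).
  - unfold boxleq, odelta, omul. split; [exact I|]. apply le_meet.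
    + apply (le_trans _ (meet a b)); [apply meet_le_l | apply meet_le_l].
    + apply (le_trans _ (meet b c)); [apply meet_le_r | apply meet_le_r].
Qed.
End Closed.

Definition memS (H : G -> Prop) (g : option G) : Prop :=
  match g with None => True | Some a => H a end.
Definition eqv (H : G -> Prop) (g g' : option G) : Prop :=
  match g, g' with None, None => True | Some a, Some b => H (meet a b) | _, _ => False end.
Definition cls (H : G -> Prop) (g : option G) : option G -> Prop :=
  fun k => memS H k /\ eqv H k g.
Definition gm (g : option G) (x : G) : G :=
  match g with None => x | Some a => mul a x end.

Section Closed2.
Variable H : G -> Prop.
Hypothesis Hc : fxi_closed mul meet xi delta H.

Lemma eqv_refl k : memS H k -> eqv H k k.
Proof. destruct k; simpl; auto. rewrite meet_idem; auto. Qed.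
Lemma eqv_sym k k' : eqv H k k' -> eqv H k' k.
Proof. destruct k, k'; simpl; auto. rewrite meet_comm; auto. Qed.
Lemma eqv_trans k1 k2 k3 : eqv H k1 k2 -> eqv H k2 k3 -> eqv H k1 k3.
Proof. destruct k1, k2, k3; simpl; try tauto. apply trans3; auto. Qed.
Lemma cls_eq_eqv k k' : memS H k -> cls H k = cls H k' -> eqv H k k'.
Proof.
  intros hm e. assert (h : cls H k k) by (split; auto; apply eqv_refl; auto).
  rewrite e in h. destruct h; auto.
Qed.
Lemma eqv_cls k k' : eqv H k k' -> cls H k = cls H k'.
Proof.
  intro e. apply functional_extensionality; intro k0. apply propositional_extensionality.
  unfold cls; split; intros [m e']; split; auto.
  - eapply eqv_trans; eauto.
  - eapply eqv_trans; eauto. apply eqv_sym; auto.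
Qed.

Lemma wd g g' x : eqv H g g' -> H (gm g x) -> H (gm g' x) /\ eqv H (Some (gm g x)) (Some (gm g' x)).
Proof.
  destruct g as [a|], g' as [b|]; simpl; intros e hx; try contradiction.
  - assert (h1 : H (mul (meet a b) x)).
    { apply (Hc (Some x) None None (mul (meet a b) x) (meet a b) a).
      + apply C2, meet_le_l.
      + unfold boxleq, odelta, omul. split; [exact I|].
        pose proof (meet_le_l a b) as E; unfold sleq in E. rewrite E. apply le_refl.
      + exact e.
      + simpl; exact hx. }
    assert (h2 : H (mul b x)) by (apply (up H Hc _ _ h1); apply le_mulr, meet_le_r).
    split; auto. apply (up H Hc _ _ h1). apply le_meet; apply le_mulr; [apply meet_le_l | apply meet_le_r].
  - split; auto. rewrite meet_idem; auto.
Qed.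
End Closed2.

Lemma gm_assoc g x y : gm g (mul x y) = mul (gm g x) y.
Proof. destruct g; simpl; auto. Qed.
Lemma gm_meet g x y : gm g (meet x y) = meet (gm g x) (gm g y).
Proof. destruct g; simpl; auto. Qed.
Lemma xi_gm g x y : xi x y -> xi (gm g x) (gm g y).
Proof. destruct g; simpl; auto. Qed.
Lemma delta_gm g x y : delta x y -> delta (gm g x) y.
Proof. destruct g; simpl; auto. Qed.

Definition AA := ((G -> Prop) * (option G -> Prop))%type.
Definition hh (x : G) : transf AA := fun p q =>
  fst p = fst q /\ fxi_closed mul meet xi delta (fst p) /\
  exists g, memS (fst p) g /\ fst p (gm g x) /\ snd p = cls (fst p) g /\
            snd q = cls (fst p) (Some (gm g x)).


Lemma hh_functional x : functional (hh x).
Proof.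
  intros [H a] [H1 b] [H2 c] [e1 [hc [g [m [hx [ea eb]]]]]] [e2 [_ [g' [m' [hx' [ea' ec]]]]]].
  simpl in *. subst H1 H2 b c.
  rewrite ea in ea'. apply cls_eq_eqv in ea'; auto.
  destruct (wd H hc g g' x ea' hx) as [_ e]. f_equal. apply eqv_cls; auto.
Qed.

Lemma hh_comp x y : hh (mul x y) = tcomp (hh x) (hh y).
Proof.
  apply rel_ext. intros [H a] [H' c]. unfold hh, tcomp; simpl. split.
  - intros [e [hc [g [m [hx [ea ec]]]]]].
    rewrite gm_assoc in hx, ec.
    exists (H, cls H (Some (gm g x))). simpl. split.
    + split; auto. split; auto. exists g. repeat split; auto. eapply pref; eauto.
    + split; auto. split; auto. exists (Some (gm g x)). simpl. repeat split; auto.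
      eapply pref; eauto.
  - intros [[Hb b] [[e1 [hc [g [m [hx [ea eb]]]]]] [e2 [_ [g' [m' [hx' [eb' ec]]]]]]]].
    simpl in *. subst Hb H'.
    rewrite eb in eb'. apply cls_eq_eqv in eb'; try solve [simpl; auto].
    apply eqv_sym in eb'.
    destruct (wd H hc g' (Some (gm g x)) y eb' hx') as [h1 h2]. simpl in h1, h2.
    split; auto. split; auto. exists g. rewrite gm_assoc. repeat split; auto.
    rewrite ec. apply eqv_cls; auto.
Qed.

Lemma hh_meet x y : hh (meet x y) = tinter (hh x) (hh y).
Proof.
  apply rel_ext. intros [H a] [H' c]. unfold hh, tinter; simpl. split.
  - intros [e [hc [g [m [hx [ea ec]]]]]]. subst H'.
    rewrite gm_meet in hx, ec.
    assert (h1 : H (gm g x)) by (apply (up H hc (meet (gm g x) (gm g y))); [exact hx | apply meet_le_l]).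
    assert (h2 : H (gm g y)) by (apply (up H hc (meet (gm g x) (gm g y))); [exact hx | apply meet_le_r]).
    split; (split; auto; split; auto; exists g; repeat split; auto; rewrite ec; apply eqv_cls; auto; simpl).
    + pose proof (meet_le_l (gm g x) (gm g y)) as E; unfold sleq in E. rewrite E; auto.
    + pose proof (meet_le_r (gm g x) (gm g y)) as E; unfold sleq in E. rewrite E; auto.
  - intros [[e1 [hc [g [m [hx [ea ec]]]]]] [e2 [_ [g' [m' [hy [ea' ec']]]]]]].
    subst H'.
    rewrite ea in ea'. apply cls_eq_eqv in ea'; auto.
    destruct (wd H hc g' g y (eqv_sym H _ _ ea') hy) as [hy1 e3].
    rewrite ec in ec'. apply cls_eq_eqv in ec'; try solve [simpl; auto].
    assert (e4 : eqv H (Some (gm g x)) (Some (gm g y))).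
    { exact (eqv_trans H hc _ _ _ ec' e3). }
    simpl in e4.
    split; auto. split; auto. exists g. rewrite gm_meet. repeat split; auto.
    rewrite ec. apply eqv_cls; auto. simpl.
    rewrite meet_assoc, meet_idem. auto.
Qed.

Lemma hh_sc1 x y : xi x y -> forall p q, hh x p q -> pr1 (hh y) p -> hh y p q.
Proof.
  intros hxy [H a] [H' c] [e [hc [g [m [hx [ea ec]]]]]] [[H2 b] [_ [_ [g' [m' [hy [ea' _]]]]]]].
  simpl in *. subst H'.
  rewrite ea in ea'. apply cls_eq_eqv in ea'; auto.
  destruct (wd H hc g' g y (eqv_sym H _ _ ea') hy) as [hy1 _].
  assert (hm : H (meet (gm g x) (gm g y))).
  { apply (hc None None None (meet (gm g x) (gm g y)) (gm g x) (gm g y)); auto.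
    - apply xi_gm; auto.
    - unfold boxleq, odelta, omul. split; [exact I|]. apply le_refl. }
  split; auto. split; auto. exists g. repeat split; auto.
  rewrite ec. apply eqv_cls; auto.
Qed.

Lemma hh_sc x y : xi x y -> semicompat (hh x) (hh y).
Proof.
  intros h p q. split.
  - intros [h1 h2]. split; [eapply hh_sc1; eauto | exists q; auto].
  - intros [h1 h2]. split; [eapply hh_sc1; eauto; apply xi_sym; auto | exists q; auto].
Qed.

Lemma hh_sa x y : delta x y -> semiadj (hh x) (hh y).
Proof.
  intros hd [H b] [[H0 a] [e [hc [g [m [hx [ea eb]]]]]]]. simpl in *. subst H0.
  exists (H, cls H (Some (mul (gm g x) y))). split; auto. split; auto.
  assert (hxy : H (mul (gm g x) y)).
  { apply (hc None (Some y) None (mul (gm g x) y) (gm g x) (gm g x) (xi_refl _)); auto.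
    unfold boxleq, odelta, omul. rewrite meet_idem. split.
    - apply delta_gm; auto.
    - apply le_refl. }
  exists (Some (gm g x)). simpl. repeat split; auto.
Qed.


Lemma fxi_is_closed X : fxi_closed mul meet xi delta (fxi mul meet xi delta X).
Proof.
  intros x y t z u v huv hb hu hv H' hc hX.
  exact (hc x y t z u v huv hb (hu H' hc hX) (hv H' hc hX)).
Qed.
Lemma fxi_incl (X : G -> Prop) w : X w -> fxi mul meet xi delta X w.
Proof. intros hw H' hc hX; auto. Qed.

Lemma hh_point H x : fxi_closed mul meet xi delta H -> H x ->
  hh x (H, cls H None) (H, cls H (Some x)).
Proof. intros hc hx. split; auto. split; auto. exists None. simpl. repeat split; auto. Qed.

Lemma hh_from_point H y q : hh y (H, cls H None) q ->
  fxi_closed mul meet xi delta H /\ H y /\ q = (H, cls H (Some y)).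
Proof.
  destruct q as [H' b]. intros [e [hc [g [m [hy [ea eb]]]]]]. simpl in *. subst H'.
  apply cls_eq_eqv in ea; [|exact I]. destruct g; simpl in ea; [contradiction|].
  simpl in *. repeat split; auto. rewrite eb; auto.
Qed.


Hypothesis C7 : forall x y, fxi mul meet xi delta (fun w => w = x) (meet x y) -> sleq meet x y.
Hypothesis C8 : forall x y, fxi mul meet xi delta (fun w => w = x \/ w = y) (meet x y) -> xi x y.
Hypothesis C9 : forall x y, fxi mul meet xi delta (fun w => w = x) (mul x y) -> delta x y.

Lemma sep_le x y : hh x = hh y -> sleq meet x y.
Proof.
  intros e. set (H := fxi mul meet xi delta (fun w => w = x)).
  assert (hc : fxi_closed mul meet xi delta H) by apply fxi_is_closed.
  assert (hx : H x) by (apply fxi_incl; reflexivity).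
  pose proof (hh_point H x hc hx) as p. rewrite e in p. apply hh_from_point in p.
  destruct p as [_ [hy eq]]. injection eq as eq'.
  apply (cls_eq_eqv H (Some x) (Some y) hx) in eq'. apply C7. exact eq'.
Qed.

Lemma suff_main : representable mul meet xi delta.
Proof.
  exists AA, (fun f => exists x, hh x = f), hh.
  split; [exact (inhabits ((fun _ => True), (fun _ => True)))|]. split.
  - split; [intros f [x <-]; apply hh_functional|]. split.
    + intros f g [x <-] [y <-]. exists (mul x y). apply hh_comp.
    + intros f g [x <-] [y <-]. exists (meet x y). apply hh_meet.
  - split; [intro x; exists x; auto|].
    split; [intros f [x e]; exists x; auto|].
    split.
    { intros x y e. pose proof (sep_le x y e) as l1. pose proof (sep_le y x (eq_sym e)) as l2.
      unfold sleq in *. transitivity (meet x y); [symmetry; exact l1|]. rewrite meet_comm; exact l2. }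
    split; [apply hh_comp|]. split; [apply hh_meet|]. split.
    + intros x y; split; [apply hh_sc|]. intros hs.
      set (H := fxi mul meet xi delta (fun w => w = x \/ w = y)).
      assert (hc : fxi_closed mul meet xi delta H) by apply fxi_is_closed.
      assert (hx : H x) by (apply fxi_incl; auto).
      assert (hy : H y) by (apply fxi_incl; auto).
      pose proof (hh_point H x hc hx) as p. pose proof (hh_point H y hc hy) as p'.
      destruct (proj1 (hs _ _) (conj p (ex_intro _ _ p'))) as [q _].
      apply hh_from_point in q. destruct q as [_ [_ eq]]. injection eq as eq'.
      apply (cls_eq_eqv H (Some x) (Some y) hx) in eq'. apply C8. exact eq'.
    + intros x y; split; [apply hh_sa|]. intros hs.
      set (H := fxi mul meet xi delta (fun w => w = x)).
      assert (hc : fxi_closed mul meet xi delta H) by apply fxi_is_closed.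
      assert (hx : H x) by (apply fxi_incl; auto).
      pose proof (hh_point H x hc hx) as p.
      destruct (hs _ (ex_intro (fun a => hh x a (H, cls H (Some x))) _ p)) as [q [_ [_ [g [m [hyy [ea _]]]]]]].
      simpl in *. apply (cls_eq_eqv H (Some x) g hx) in ea.
      destruct (wd H hc g (Some x) y (eqv_sym H _ _ ea) hyy) as [r _].
      apply C9. exact r.
Qed.
End Suff.

Section Nec.
Variables (G : Type) (mul meet : G -> G -> G) (xi delta : G -> G -> Prop).
Variables (A : Type) (h : G -> transf A).
Hypothesis fun_h : forall x, functional (h x).
Hypothesis hinj : forall x y, h x = h y -> x = y.
Hypothesis hmul : forall x y, h (mul x y) = tcomp (h x) (h y).
Hypothesis hmeet : forall x y, h (meet x y) = tinter (h x) (h y).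
Hypothesis hxi : forall x y, xi x y <-> semicompat (h x) (h y).
Hypothesis hdelta : forall x y, delta x y <-> semiadj (h x) (h y).

Lemma hsub x y : sleq meet x y -> forall a b, h x a b -> h y a b.
Proof. unfold sleq; intros e a b hx. rewrite <- e, hmeet in hx. apply hx. Qed.

Lemma pr1_omul z t a : pr1 (h (omul mul z t)) a -> pr1 (h z) a.
Proof.
  destruct t as [t|]; simpl; auto. rewrite hmul. intros [c [b [hz _]]]. exists b; auto.
Qed.

Lemma Ha_closed a : fxi_closed mul meet xi delta (fun g => pr1 (h g) a).
Proof.
  intros x y t z u v huv [hd hle] [b hu] hv.
  apply hxi in huv.
  assert (hm : pr1 (h (omul mul (meet u v) x)) a).
  { destruct x as [x|]; simpl in *.
    - rewrite hmul in hv |- *. destruct hv as [c [b' [hv hx]]].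
      assert (hv2 : h v a b) by (apply (huv a b); split; auto; exists b'; auto).
      pose proof (fun_h v a b b' hv2 hv) as E. subst b'.
      exists c, b. split; auto. rewrite hmeet. split; auto.
    - assert (hv2 : h v a b) by (apply (huv a b); split; auto).
      exists b. rewrite hmeet. split; auto. }
  apply (pr1_omul z t).
  destruct y as [y|]; simpl in *.
  - apply hdelta in hd.
    destruct hm as [b1 hm]. destruct (hd b1 (ex_intro _ a hm)) as [c hc].
    exists c. apply (hsub _ _ hle). rewrite hmul. exists b1; auto.
  - destruct hm as [b1 hm]. exists b1. apply (hsub _ _ hle). auto.
Qed.

Lemma nec_main :
    (forall x u v, xi u v -> xi (mul x u) (mul x v)) /\
    (forall x y, sleq meet x y -> xi x y) /\
    (forall x y u, delta x y -> delta (mul u x) y) /\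
    (forall x y z, mul x (meet y z) = meet (mul x y) (mul x z)) /\
    (forall x y u v, sleq meet x y -> sleq meet u v -> xi y v -> xi u x) /\
    (forall x y u, xi x y -> mul (meet x y) u = meet (mul x u) (mul y u)) /\
    (forall x y, fxi mul meet xi delta (fun w => w = x) (meet x y) -> sleq meet x y) /\
    (forall x y, fxi mul meet xi delta (fun w => w = x \/ w = y) (meet x y) -> xi x y) /\
    (forall x y, fxi mul meet xi delta (fun w => w = x) (mul x y) -> delta x y).
Proof.
  split.
  { intros x u v huv. apply hxi. apply hxi in huv. rewrite !hmul. intros a c. split.
    - intros [[b [hx hu]] [c' [b' [hx' hv]]]].
      pose proof (fun_h x a b b' hx hx'); subst b'.
      destruct (proj1 (huv b c) (conj hu (ex_intro _ c' hv))) as [hv2 _].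
      split; [exists b; auto | exists c, b; auto].
    - intros [[b [hx hv]] [c' [b' [hx' hu]]]].
      pose proof (fun_h x a b b' hx hx'); subst b'.
      destruct (proj2 (huv b c) (conj hv (ex_intro _ c' hu))) as [hu2 _].
      split; [exists b; auto | exists c, b; auto]. }
  split.
  { intros x y hle. apply hxi. intros a b. split.
    - intros [hx [c hy]]. split; [apply (hsub x y hle); auto | exists b; auto].
    - intros [hy [c hx]]. pose proof (hsub x y hle a c hx) as hy'.
      pose proof (fun_h y a b c hy hy'); subst c. split; auto. exists b; auto. }
  split.
  { intros x y u hd. apply hdelta; apply hdelta in hd. rewrite hmul.
    intros c [a [b [hu hx]]]. apply hd. exists b; auto. }
  split.
  { intros x y z. apply hinj. rewrite !hmul, !hmeet, !hmul. apply rel_ext; intros a c.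
    unfold tcomp, tinter. split.
    - intros [b [hx [hy hz]]]. split; exists b; auto.
    - intros [[b [hx hy]] [b' [hx' hz]]]. pose proof (fun_h x a b b' hx hx'); subst b'.
      exists b; auto. }
  split.
  { intros x y u v hxy huv hyv. apply hxi; apply hxi in hyv. intros a b. split.
    - intros [hu [c hx]]. pose proof (hsub u v huv a b hu) as hv.
      pose proof (hsub x y hxy a c hx) as hy.
      destruct (proj2 (hyv a b) (conj hv (ex_intro _ c hy))) as [hy2 _].
      pose proof (fun_h y a b c hy2 hy); subst c. split; auto. exists b; auto.
    - intros [hx [c hu]]. pose proof (hsub x y hxy a b hx) as hy.
      pose proof (hsub u v huv a c hu) as hv.
      destruct (proj1 (hyv a b) (conj hy (ex_intro _ c hv))) as [hv2 _].
      pose proof (fun_h v a b c hv2 hv); subst c. split; auto. exists b; auto. }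
  split.
  { intros x y u hxy. apply hxi in hxy. apply hinj. rewrite !hmul, !hmeet, !hmul.
    apply rel_ext; intros a c; unfold tcomp, tinter; split.
    - intros [b [[hx hy] hu]]. split; exists b; auto.
    - intros [[b [hx hu]] [b' [hy hu']]].
      destruct (proj1 (hxy a b) (conj hx (ex_intro _ b' hy))) as [hy2 _].
      exists b; auto. }
  split.
  { intros x y hf. apply hinj. rewrite hmeet. apply rel_ext; intros a b; split.
    - intros [hx _]; auto.
    - intros hx.
      assert (hp : pr1 (h (meet x y)) a).
      { apply (hf (fun g => pr1 (h g) a) (Ha_closed a)). intros w ->. exists b; auto. }
      rewrite hmeet in hp. destruct hp as [c [hx' hy]].
      pose proof (fun_h x a b c hx hx'); subst c. split; auto. }
  split.
  { intros x y hf. apply hxi. intros a b; split.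
    - intros [hx [c hy]].
      assert (hp : pr1 (h (meet x y)) a).
      { apply (hf (fun g => pr1 (h g) a) (Ha_closed a)). intros w [-> | ->]; eexists; eauto. }
      rewrite hmeet in hp. destruct hp as [d [hx' hy']].
      pose proof (fun_h x a b d hx hx'); subst d. split; auto. exists b; auto.
    - intros [hy [c hx]].
      assert (hp : pr1 (h (meet x y)) a).
      { apply (hf (fun g => pr1 (h g) a) (Ha_closed a)). intros w [-> | ->]; eexists; eauto. }
      rewrite hmeet in hp. destruct hp as [d [hx' hy']].
      pose proof (fun_h y a b d hy hy'); subst d. split; auto. exists b; auto. }
  { intros x y hf. apply hdelta. intros b [a hx].
    assert (hp : pr1 (h (mul x y)) a).
    { apply (hf (fun g => pr1 (h g) a) (Ha_closed a)). intros w ->. exists b; auto. }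
    rewrite hmul in hp. destruct hp as [c [b' [hx' hy]]].
    pose proof (fun_h x a b b' hx hx'); subst b'. exists c; auto. }
Qed.
End Nec.

Theorem theorem1 (G : Type) (mul meet : G -> G -> G) (xi delta : G -> G -> Prop)
  (mul_assoc : forall x y z, mul x (mul y z) = mul (mul x y) z)
  (meet_assoc : forall x y z, meet x (meet y z) = meet (meet x y) z)
  (meet_comm : forall x y, meet x y = meet y x)
  (meet_idem : forall x, meet x x = x) :
  representable mul meet xi delta <->
  ( (* (1) *)
    (forall x u v, xi u v -> xi (mul x u) (mul x v)) /\
    (forall x y, sleq meet x y -> xi x y) /\
    (* (2) *)
    (forall x y u, delta x y -> delta (mul u x) y) /\
    (* (3) *)
    (forall x y z, mul x (meet y z) = meet (mul x y) (mul x z)) /\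
    (forall x y u v, sleq meet x y -> sleq meet u v -> xi y v -> xi u x) /\
    (forall x y u, xi x y -> mul (meet x y) u = meet (mul x u) (mul y u)) /\
    (* (4) *)
    (forall x y, fxi mul meet xi delta (fun w => w = x) (meet x y) -> sleq meet x y) /\
    (forall x y, fxi mul meet xi delta (fun w => w = x \/ w = y) (meet x y) -> xi x y) /\
    (forall x y, fxi mul meet xi delta (fun w => w = x) (mul x y) -> delta x y) ).
Proof.
  split.
  - intros [A [Phi [h [_ [[Pf _] [hin [_ [hinj [hmul [hmeet [hxi hdelta]]]]]]]]]]].
    apply (nec_main G mul meet xi delta A h); auto.
  - intros [C1 [C2 [C3 [C4 [C5 [C6 [C7 [C8 C9]]]]]]]].
    eapply suff_main; eassumption.
Qed.
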